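(* Consider a resource selection game with finite player set $N$ and finite resource set $R$ in which all resources have the same strictly increasing delay function $d$, and let $\mathcal{P}$ be a partition of $N$. Then every sequence of weak improving moves, each performed by a coalition that is a set of the partition $\mathcal{P}$, is finite, and it ends in a partition equilibrium.
   Context: Resource selection game: every player's strategy set is $R$; a state is $s=(s_i)_{i\in N}$ with $s_i\in R$; $\ell_r(s)$ is the number of players choosing $r$; player $i$'s cost is $c_i(s)=d(\ell_{s_i}(s))$ and utility $u_i(s)=-c_i(s)$, where $d:\{1,\dots,|N|\}\to\mathbb{N}$ is non-negative and strictly increasing. For $C\subseteq N$ write $s=(s_C,s_{-C})$. A weak improving move of coalition $C$ from state $s$ is a choice $s'_C$ with $u_i(s'_C,s_{-C})\ge u_i(s)$ for all $i\in C$ and $u_i(s'_C,s_{-C})>u_i(s)$ for at least one $i\in C$; the resulting state is $(s'_C,s_{-C})$. A partition equilibrium (with respect to $\mathcal{P}$) is a state in which no set $C\in\mathcal{P}$ has a weak improving move. *)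

(* Defs.v *)
From mathcomp Require Import all_boot all_order all_algebra.
Import Order.TTheory GRing.Theory Num.Theory.
Set Implicit Arguments. Unset Strict Implicit. Unset Printing Implicit Defensive.

Section RSG.
Variables (N R : finType).

Definition state := {ffun N -> R}.

Definition load (s : state) (r : R) : nat := #|[set j | s j == r]|.

Definition cost (d : nat -> nat) (s : state) (i : N) : nat := d (load s (s i)).

Definition utility (d : nat -> nat) (s : state) (i : N) : int :=
  (- (Posz (cost d s i)))%R.

Definition weak_improving_move (d : nat -> nat) (C : {set N}) (s s' : state) : Prop :=
  [/\ (forall j, j \notin C -> s' j = s j),
      (forall i, i \in C -> (utility d s i <= utility d s' i)%R)
    & (exists2 i, i \in C & (utility d s i < utility d s' i)%R)].

Definition partition_move (d : nat -> nat) (P : {set {set N}}) (s s' : state) : Prop :=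
  exists2 C, C \in P & weak_improving_move d C s s'.

Definition partition_equilibrium (d : nat -> nat) (P : {set {set N}}) (s : state) : Prop :=
  forall C, C \in P -> forall s' : state, ~ weak_improving_move d C s s'.

Definition strictly_increasing_on_players (d : nat -> nat) : Prop :=
  forall m n, 1 <= m -> m < n -> n <= #|N| -> d m < d n.

End RSG.

(* Main.v *)
Require Import Defs.
From mathcomp Require Import all_boot all_order all_algebra.
From mathcomp Require Import zify.
Import Order.TTheory GRing.Theory Num.Theory.
Set Implicit Arguments. Unset Strict Implicit. Unset Printing Implicit Defensive.

Section Aux.
Variables (N R : finType) (P : {set {set N}}).

Definition ee (s : state N R) (i j : N) : nat := (s i == s j).
Definition ww (i j : N) : nat := 1 + (j \in pblock P i).
Definition Phi (s : state N R) : nat := \sum_i \sum_j ee s i j * ww i j.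

Lemma load_sum (s : state N R) i : load s (s i) = \sum_j ee s i j.
Proof.
rewrite /load -sum1dep_card big_mkcond /=; apply: eq_bigr => j _.
by rewrite /ee eq_sym; case: (s j == s i).
Qed.

Lemma Phi_split (s : state N R) (C : {set N}) :
  partition P [set: N] -> C \in P ->
  Phi s = 2 * (\sum_(i in C) load s (s i)) +
          \sum_(i | i \notin C) \sum_(j | j \notin C) ee s i j * ww i j.
Proof.
move=> /and3P[/eqP cov tI _] CP.
have wC i j : i \in C -> ww i j = 1 + (j \in C).
  by move=> iC; rewrite /ww (def_pblock tI CP iC).
have wN i j : i \notin C -> j \in C -> ww i j = 1.
  move=> iC jC; rewrite /ww; case jb: (j \in pblock P i) => //=; exfalso.
  have ic : i \in cover P by rewrite cov.
  have h1 := def_pblock tI (pblock_mem ic) jb.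
  have h2 := def_pblock tI CP jC.
  move: (ic); rewrite -mem_pblock -h1 h2 => iC'.
  by rewrite iC' in iC.
rewrite /Phi (bigID (fun i => i \in C)) /=.
rewrite (eq_bigr (fun i => \sum_(j in C) 2 * ee s i j + \sum_(j | j \notin C) ee s i j));
  last first.
  move=> i iC; rewrite (bigID (fun j => j \in C)) /=; congr (_ + _).
    by apply: eq_bigr => j jC; rewrite wC // jC mulnC.
  by apply: eq_bigr => j jC; rewrite wC // (negbTE jC) muln1.
rewrite [X in _ + X](eq_bigr (fun i => \sum_(j in C) ee s j i + \sum_(j | j \notin C) ee s i j * ww i j));
  last first.
  move=> i iC; rewrite (bigID (fun j => j \in C)) /=; congr (_ + _).
  by apply: eq_bigr => j jC; rewrite wN // muln1 /ee eq_sym.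
rewrite [X in _ + X]big_split /= addnA; congr (_ + _).
rewrite (exchange_big_dep (mem C)) //= -big_split /= big_distrr /=.
apply: eq_bigr => i iC.
have -> : \sum_(k | (k \notin C) && (i \in C)) ee s i k = \sum_(k | k \notin C) ee s i k by apply: eq_bigl => k; rewrite iC andbT.
rewrite load_sum [X in _ = _ * X](bigID (fun j => j \in C)) /= mulnDr big_distrr /=.
lia.
Qed.

End Aux.

Lemma load_pos (N R : finType) (s : state N R) i : 1 <= load s (s i).
Proof. by rewrite /load card_gt0; apply/set0Pn; exists i; rewrite inE. Qed.

Lemma load_le (N R : finType) (s : state N R) r : load s r <= #|N|.
Proof. by rewrite /load max_card. Qed.

Theorem proposition1 (N R : finType) (d : nat -> nat) (P : {set {set N}}) :
  partition P [set: N] ->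
  strictly_increasing_on_players N d ->
  (~ exists f : nat -> state N R, forall n, partition_move d P (f n) (f n.+1)) /\
  (forall s : state N R, (forall s', ~ partition_move d P s s') ->
     partition_equilibrium d P s).
Proof.
move=> hP hd; split; last first.
  by move=> s hs C CP s' hm; apply: (hs s'); exists C.
have mono a b : 1 <= a -> a <= #|N| -> 1 <= b -> b <= #|N| ->
    (d a <= d b -> a <= b) /\ (d a < d b -> a < b).
  move=> a1 aN b1 bN; split.
    move=> h; rewrite leqNgt; apply/negP => ba.
    by have := hd b a b1 ba aN; rewrite ltnNge h.
  move=> h; rewrite ltnNge; apply/negP => ba.
  move: ba; rewrite leq_eqVlt => /orP[/eqP eb | ba]; first by rewrite eb ltnn in h.
  by have := hd b a b1 ba aN; rewrite ltnNge (ltnW h).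
have dec s s' : partition_move d P s s' -> Phi P s' < Phi P s.
  case=> C CP [hout hin [i iC hi]].
  rewrite (Phi_split s hP CP) (Phi_split s' hP CP).
  have -> : \sum_(i | i \notin C) \sum_(j | j \notin C) ee s' i j * ww P i j =
            \sum_(i | i \notin C) \sum_(j | j \notin C) ee s i j * ww P i j.
    apply: eq_bigr => i0 i0C; apply: eq_bigr => j jC.
    by rewrite /ee (hout _ i0C) (hout _ jC).
  have le k : k \in C -> load s' (s' k) <= load s (s k).
    move=> kC; have := hin k kC; rewrite /utility lerN2 lez_nat /cost => h.
    by apply: (mono _ _ (load_pos _ _) (load_le _ _) (load_pos _ _) (load_le _ _)).1.
  have lt : load s' (s' i) < load s (s i).
    move: hi; rewrite /utility ltrN2 ltz_nat /cost => h.
    by apply: (mono _ _ (load_pos _ _) (load_le _ _) (load_pos _ _) (load_le _ _)).2.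
  rewrite ltn_add2r ltn_pmul2l // (bigD1 i iC) [X in _ < X](bigD1 i iC) /=.
  rewrite -addSn leq_add //; apply: leq_sum => k /andP[kC _]; exact: le.
case=> f hf.
have bound n : Phi P (f n) + n <= Phi P (f 0).
  elim: n => [|n IH]; first by rewrite addn0.
  have := dec _ _ _ (hf n); lia.
by have := bound (Phi P (f 0)).+1; lia.
Qed.
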